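(* Let $k\ge1$, $n\ge 2k+1$, $g:=\gcd(n,k)$, and $r\in\{0,\dots,n-1\}$. Take the symmetric difference of the union of the edge sets of the $g$ cycles $C(s_0),\dots,C(s_{g-1})$ with the edge sets of the $4$-cycles $(s_{r+j},s_{r+j+k},s_{r+j+2k+1},s_{r+j+k+1})$ for $j=0,\dots,g-2$. The result is the edge set of a single cycle in $K(n,k)$ on the vertex set $\{s_0,\dots,s_{n-1}\}$.
   Context: Vertices of $K(n,k)$ are binary strings of length $n$ with $k$ ones, adjacent iff they have no $1$ at a common position. $\sigma^i$ denotes cyclic right shift by $i$ positions. For $i\in\mathbb{Z}$ (indices mod $n$), $s_i:=\sigma^i(1^k0^{n-k})$. For $x$ such a string, $f(x)$ is obtained by cyclic parenthesis matching ($1$s opening, $0$s closing brackets, each $1$ at position $i$ matched to the last $0$ of the shortest cyclic substring starting at $i$ going right with equally many $0$s and $1$s) and complementing all matched bits; $C(x)=(x,f(x),f^2(x),\dots)$ until $x$ reappears. (One has $f(s_i)=s_{i+k}$, so $C(s_i)=(s_{i+kj})_{j=0,\dots,n/g-1}$ and the cycles $C(s_0),\dots,C(s_{g-1})$ are distinct and partition $\{s_0,\dots,s_{n-1}\}$.) *)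

(* Defs.v *)
From mathcomp Require Import all_boot.
Set Implicit Arguments. Unset Strict Implicit. Unset Printing Implicit Defensive.

Definition word (n : nat) := {ffun 'I_n -> bool}.

Definition getb n (x : word n) (m : nat) : bool :=
  if (insub (m %% n) : option 'I_n) is Some j then x j else false.

Definition weight n (x : word n) : nat := #|[set j | x j]|.

Definition kneser_adj n k (x y : word n) : bool :=
  [&& weight x == k, weight y == k & [forall j, ~~ (x j && y j)]].

(* cyclic right shift sigma: new bit at j is old bit at j-1 *)
Definition sigma n (x : word n) : word n := [ffun j : 'I_n => getb x (j + n - 1)].

Definition sv n k (i : nat) : word n := iter i (@sigma n) [ffun j : 'I_n => j < k].

(* cyclic parenthesis matching *)
Definition ones n (x : word n) (i l : nat) : nat := count (fun t => getb x (i + t)) (iota 0 l).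
Definition balanced n (x : word n) (i l : nat) : bool := (0 < l) && (ones x i l * 2 == l).
Definition has_match n (x : word n) (i : nat) : bool := has (balanced x i) (iota 1 n).
Definition mlen n (x : word n) (i : nat) : nat :=
  nth 0 (iota 1 n) (find (balanced x i) (iota 1 n)).
(* position j is matched: either a 1 with a match, or the last 0 of the
   shortest balanced substring starting at some matched 1 *)
Definition matched n (x : word n) (j : 'I_n) : bool :=
  (x j && has_match x j) ||
  [exists i : 'I_n, [&& x i, has_match x i & (i + mlen x i).-1 %% n == j]].
Definition fmap n (x : word n) : word n :=
  [ffun j => if matched x j then ~~ x j else x j].

Definition cycle_edges n (x : word n) : {set {set word n}} :=
  [set [set y; fmap y] | y in orbit (@fmap n) x].

Definition quad_edges n (a b c d : word n) : {set {set word n}} :=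
  [set [set a; b]; [set b; c]; [set c; d]; [set d; a]].

Definition symdiff (T : finType) (A B : {set T}) : {set T} := (A :\: B) :|: (B :\: A).

Definition result_edges n k r : {set {set word n}} :=
  let g := gcdn n k in
  foldl (fun E j => symdiff E (quad_edges (sv n k (r + j)) (sv n k (r + j + k))
                                           (sv n k (r + j + 2 * k + 1)) (sv n k (r + j + k + 1))))
        (\bigcup_(i < g) cycle_edges (sv n k i)) (iota 0 g.-1).

Definition seq_cycle_edges n (c : seq (word n)) : {set {set word n}} :=
  [set [set y; next c y] | y in c].

(* Main.v *)
Require Import Defs.
From mathcomp Require Import all_boot zify.
Set Implicit Arguments. Unset Strict Implicit. Unset Printing Implicit Defensive.

Ltac slia := repeat match goal with H : context [modn] |- _ => clear H end; lia.

Section Words.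
Variables n k : nat.
Hypothesis k0 : 0 < k.
Hypothesis kn : 2 * k + 1 <= n.

Lemma n_gt0 : 0 < n. Proof. lia. Qed.

Local Notation S := (sv n k).

Lemma getbE (x : word n) p : getb x p = x (Ordinal (ltn_pmod p n_gt0)).
Proof.
rewrite /getb; case: insubP => [j _ hj|]; last by rewrite ltn_pmod // n_gt0.
by congr (x _); apply/val_inj.
Qed.

Lemma getb_eqmod (x : word n) p q : p = q %[mod n] -> getb x p = getb x q.
Proof. by rewrite /getb => ->. Qed.

Lemma getb_ord (x : word n) (j : 'I_n) : getb x j = x j.
Proof. by rewrite getbE; congr (x _); apply/val_inj; rewrite /= modn_small. Qed.

Lemma sv_exists i p : getb (S i) p = [exists t : 'I_k, (i + t) %% n == p %% n].
Proof.
elim: i p => [|i IH] p.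
  rewrite getbE /sv /= ffunE /=; apply/idP/existsP.
    by move=> h; exists (Ordinal h); rewrite add0n modn_mod.
  case=> t /eqP; rewrite add0n => <-; rewrite modn_small //.
  have := ltn_ord t; lia.
rewrite getbE /sv iterS -/(sv n k i) /sigma ffunE IH /=.
apply: eq_existsb => t.
rewrite -(eqn_modDr 1) (_ : i + t + 1 = i.+1 + t); last lia.
rewrite (_ : p %% n + n - 1 + 1 = p %% n + n); last by have := n_gt0; lia.
by rewrite modnDr modn_mod.
Qed.

Lemma modS_small a s : a = a + s %[mod n] -> s < n -> s = 0.
Proof.
move=> /eqP; rewrite -{1}[a]addn0 eqn_modDl mod0n => /eqP h hs.
by move: h; rewrite modn_small.
Qed.

Lemma modeq_small a b : a < n -> b < n -> a = b %[mod n] -> a = b.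
Proof. by move=> ha hb; rewrite !modn_small. Qed.

Lemma getb_S c p u : p = c + u %[mod n] -> u < n -> getb (S c) p = (u < k).
Proof.
move=> hp hu; rewrite sv_exists hp; apply/existsP/idP.
  case=> t /eqP /eqP; rewrite eqn_modDl => /eqP /modeq_small h.
  rewrite -h; [exact: ltn_ord | | exact: hu].
  have := ltn_ord t; lia.
move=> h; exists (Ordinal h) => /=; by [].
Qed.

Lemma getb_Sself c : getb (S c) c.
Proof. by rewrite (@getb_S c c 0) ?addn0 // n_gt0. Qed.

Lemma S_eq a b : (S a == S b) = (a == b %[mod n]).
Proof.
apply/eqP/eqP => [h|h].
  have h1 := getb_Sself a; rewrite h sv_exists in h1.
  have h2 := getb_Sself b; rewrite -h sv_exists in h2.
  case/existsP: h1 => t /eqP ht; case/existsP: h2 => t' /eqP ht'.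
  have : a = a + (t + t') %[mod n].
    by rewrite (addnC t) addnA -modnDml ht' modnDml ht.
  move/modS_small => h0.
  have h00 : t + t' = 0 by apply: h0; have := ltn_ord t; have := ltn_ord t'; lia.
  have t0 : nat_of_ord t = 0 by lia.
  by rewrite t0 addn0 in ht; rewrite ht.
apply/ffunP => j; rewrite -!getb_ord !sv_exists; apply: eq_existsb => t.
by rewrite -modnDml h modnDml.
Qed.

Lemma S_mod a : S a = S (a %% n).
Proof. by apply/eqP; rewrite S_eq modn_mod. Qed.


Lemma offsetP c p : p = c + (p + (n - c %% n)) %% n %[mod n].
Proof.
rewrite modnDmr.
have e : c + (p + (n - c %% n)) = (c %/ n + 1) * n + p.
  by have := ltn_pmod c n_gt0; have := divn_eq c n; lia.
by rewrite e modnMDl.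
Qed.

Lemma offset_lt c p : (p + (n - c %% n)) %% n < n.
Proof. exact: ltn_pmod _ n_gt0. Qed.

Lemma weight_S a : weight (S a) = k.
Proof.
rewrite /weight.
have -> : [set j | S a j] = [set (Ordinal (ltn_pmod (a + val t) n_gt0)) | t : 'I_k].
  apply/setP => j; rewrite inE -getb_ord sv_exists; apply/existsP/imsetP.
    case=> t /eqP h; exists t => //; apply/val_inj => /=; by rewrite h modn_small.
  by case=> t _ ->; exists t => /=; rewrite modn_mod.
rewrite card_imset ?card_ord //.
move=> t t' /(congr1 val) /= /eqP; rewrite eqn_modDl => /eqP h; apply/val_inj.
by apply: modeq_small h; [have := ltn_ord t | have := ltn_ord t']; lia.
Qed.

Lemma adj_S a d : k <= d -> d + k <= n -> kneser_adj k (S a) (S (a + d)).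
Proof.
move=> h1 h2; rewrite /kneser_adj !weight_S eqxx /=; apply/forallP => j.
apply/negP => /andP [] ; rewrite -!getb_ord !sv_exists.
case/existsP => t /eqP ht; case/existsP => t' /eqP ht'.
have : a + t = a + (d + t') %[mod n] by rewrite ht addnA ht'.
move/eqP; rewrite eqn_modDl => /eqP /modeq_small.
have := ltn_ord t; have := ltn_ord t'; move=> l1 l2 h.
have : val t = d + t' by apply: h; lia.
lia.
Qed.

Lemma adj_sym (x y : word n) : kneser_adj k x y = kneser_adj k y x.
Proof.
rewrite /kneser_adj andbCA; congr (_ && (_ && _)).
by apply: eq_forallb => j; rewrite andbC.
Qed.

Lemma count_lt_iota c l : count (fun t => t < c) (iota 0 l) = minn l c.
Proof.
elim: l => [|l IH]; first by rewrite /= min0n.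
rewrite -addn1 iotaD count_cat IH /= add0n addn0.
case: (ltnP l c) => h; lia.
Qed.

Lemma find_at (T : Type) (a : pred T) (s : seq T) x0 i :
  i < size s -> a (nth x0 s i) -> (forall j, j < i -> ~~ a (nth x0 s j)) ->
  find a s = i.
Proof.
elim: s i => [|y s IH] [|i] //=.
  by move=> _ ->.
move=> hs ha hj; have := hj 0 isT => /= /negbTE -> /=; congr (_.+1).
by apply: IH => // j hj'; apply: (hj j.+1).
Qed.

Section Fix_i.
Variable i : nat.

Lemma ones_S p u l : p = i + u %[mod n] -> u < k -> l <= 2 * (k - u) ->
  ones (S i) p l = minn l (k - u).
Proof.
move=> hp hu hl; rewrite /ones -count_lt_iota; apply: eq_in_count => t.
rewrite mem_iota add0n => /andP [_ ht].
rewrite (@getb_S i (p + t) (u + t)).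
- by apply/idP/idP; lia.
- by rewrite -modnDml hp modnDml addnA.
- lia.
Qed.

Lemma mlen_S p u : p = i + u %[mod n] -> u < k ->
  has_match (S i) p /\ mlen (S i) p = 2 * (k - u).
Proof.
move=> hp hu.
have hf : find (balanced (S i) p) (iota 1 n) = (2 * (k - u)).-1.
  apply: (find_at (x0 := 0)).
  - rewrite size_iota; lia.
  - rewrite nth_iota; last lia.
    rewrite /balanced (ones_S hp hu); last lia.
    apply/andP; split; first lia.
    apply/eqP; lia.
  - move=> j hj; rewrite nth_iota; last lia.
    rewrite /balanced (ones_S hp hu); last lia.
    apply/negP => /andP [_ /eqP]; lia.
split.
  by rewrite /has_match has_find hf size_iota; lia.
by rewrite /mlen hf nth_iota; lia.
Qed.

Lemma end_match p u : p = i + u %[mod n] -> u < k ->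
  (p + 2 * (k - u)).-1 = i + (2 * k - 1 - u) %[mod n].
Proof.
move=> hp hu.
rewrite (_ : (p + 2 * (k - u)).-1 = p + (2 * (k - u) - 1)); last lia.
rewrite -modnDml hp modnDml; congr (_ %% _); lia.
Qed.

Lemma fmap_S : fmap (S i) = S (i + k).
Proof.
apply/ffunP => j; rewrite ffunE.
have [u hu hj] : exists2 u, u < n & nat_of_ord j = i + u %[mod n].
  by exists ((j + (n - i %% n)) %% n); [apply: offset_lt | apply: offsetP].
have xj : S i j = (u < k) by rewrite -getb_ord (getb_S hj hu).
case: (ltnP u k) => h1.
  have hm : matched (S i) j.
    by rewrite /matched xj h1 /=; case: (mlen_S hj h1) => -> _.
  rewrite hm xj h1 /= -[S (i + k) j]getb_ord (@getb_S (i + k) j (u + (n - k))) //; try slia.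
  by rewrite hj (_ : i + k + (u + (n - k)) = n + (i + u)) ?modnDl //; slia.
rewrite -[S (i + k) j]getb_ord (@getb_S (i + k) j (u - k)); last slia; last first.
  by rewrite hj; congr (_ %% _); slia.
case: (ltnP u (2 * k)) => h2.
  have hm : matched (S i) j.
    apply/orP; right; apply/existsP.
    move: (erefl (2 * k - 1 - u)); move: {2}(2 * k - 1 - u) => u' hu'e.
    have hu' : u' < k by slia.
    exists (Ordinal (ltn_pmod (i + u') n_gt0)) => /=.
    have hp : (i + u') %% n = i + u' %[mod n] by rewrite modn_mod.
    have [hm1 hm2] := mlen_S hp hu'.
    have hu'n : u' < n by slia.
    rewrite -getb_ord (getb_S hp hu'n) hu' hm1 /=.
    rewrite hm2; apply/eqP; rewrite -(modn_small (ltn_ord j)) hj.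
    rewrite (end_match hp hu'); congr (_ %% _); slia.
  by rewrite hm xj; slia.
have hm : ~~ matched (S i) j.
  rewrite /matched xj ltnNge h1 /=; apply/existsP => -[i' /and3P [x1 x2 x3]].
  have [u' hu'n hi'] : exists2 u', u' < n & nat_of_ord i' = i + u' %[mod n].
    by exists ((i' + (n - i %% n)) %% n); [apply: offset_lt | apply: offsetP].
  have hu' : u' < k by rewrite -getb_ord (getb_S hi' hu'n) in x1.
  have [_ hm2] := mlen_S hi' hu'.
  move: x3; rewrite hm2 -(modn_small (ltn_ord j)) hj (end_match hi' hu') => /eqP.
  move/eqP; rewrite eqn_modDl => /eqP /modeq_small h; have : 2 * k - 1 - u' = u by apply: h; slia.
  slia.
by rewrite (negbTE hm) xj; slia.
Qed.

End Fix_i.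

End Words.

Section Graph.
Variable T : finType.
Implicit Types (c s : seq T).

Definition E c : {set {set T}} := [set [set y; next c y] | y in c].

Fixpoint pe (x : T) s : {set {set T}} :=
  if s is y :: s' then [set x; y] |: pe y s' else set0.

Lemma pe_cat x s1 s2 : pe x (s1 ++ s2) = pe x s1 :|: pe (last x s1) s2.
Proof. by elim: s1 x => [|y s IH] x /=; [rewrite set0U | rewrite IH setUA]. Qed.

Lemma pe_rcons x s y : pe x (rcons s y) = [set last x s; y] |: pe x s.
Proof. by rewrite -cats1 pe_cat /= setU0 setUC. Qed.

Lemma pe_vert x s e z : e \in pe x s -> z \in e -> z \in x :: s.
Proof.
elim: s x => [|y s IH] x /=; first by rewrite inE.
rewrite !inE => /orP [/eqP -> | he] hz.
  by rewrite !inE in hz; case/orP: hz => ->; rewrite ?orbT.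
by have := IH y he hz; rewrite inE => ->; rewrite orbT.
Qed.

Lemma pe_fpath (f : T -> T) x p e : fpath f x p ->
  (e \in pe x p) = [exists y, (y \in belast x p) && (e == [set y; f y])].
Proof.
elim: p x => [|y p IH] x /=.
  by move=> _; rewrite inE; apply/esym/existsP => -[z] /=.
case/andP => /eqP hxy hp; rewrite !inE IH //; apply/orP/existsP.
  case=> [he | /existsP [z /andP [hz he]]].
    by exists x; rewrite inE eqxx /= -hxy in he *.
  by exists z; rewrite inE hz orbT.
case=> z /andP []; rewrite inE => /orP [/eqP -> | hz] he.
  by left; rewrite -hxy.
by right; apply/existsP; exists z; rewrite hz.
Qed.

Lemma E_pe x s : uniq (x :: s) -> E (x :: s) = pe x (rcons s x).
Proof.
move=> u; apply/setP => e.
have hc := cycle_next u; rewrite /cycle in hc.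
rewrite (pe_fpath _ hc) belast_rcons; apply/imsetP/existsP.
  by case=> y hy ->; exists y; rewrite hy eqxx.
by case=> y /andP [hy /eqP ->]; exists y.
Qed.

Lemma mem_last_ne (y : T) s : s != [::] -> last y s \in s.
Proof. by case: s => // z s _; rewrite /= mem_last. Qed.

Lemma pe_wrap h s : uniq (h :: s) -> 1 < size s -> [set last h s; h] \notin pe h s.
Proof.
case: s => // y s u hs /=; rewrite !inE negb_or; apply/andP; split.
  apply/negP => /eqP he.
  have : last y s \in [set h; y] by rewrite -he !inE eqxx.
  rewrite !inE => /orP [/eqP hl | /eqP hl].
    move: u; rewrite /= inE negb_or => /andP [/andP [hy hn] _].
    have : last y s \in y :: s by apply: mem_last.
    by rewrite hl inE (negbTE hn) (negbTE hy).
  have hne : s != [::] by case: s hs {he hl u}.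
  have := mem_last_ne y hne; rewrite hl.
  by move: u => /= /andP [_ /andP [/negbTE ->]].
apply/negP => hp.
have := pe_vert hp (_ : h \in [set last y s; h]); rewrite !inE eqxx orbT => /(_ isT).
by move: u => /= /andP [/negbTE]; rewrite inE => ->.
Qed.

Definition symd (A B : {set {set T}}) := (A :\: B) :|: (B :\: A).

Lemma E_merge h1 s1 h2 s2 : uniq ((h1 :: s1) ++ (h2 :: s2)) ->
  1 < size s1 -> 1 < size s2 ->
  E ((h1 :: s1) ++ (h2 :: s2)) = symd (E (h1 :: s1) :|: E (h2 :: s2))
      [set [set last h1 s1; h1]; [set last h2 s2; h2];
           [set last h1 s1; h2]; [set last h2 s2; h1]].
Proof.
move=> u hs1 hs2.
have u1 : uniq (h1 :: s1) by move: u; rewrite cat_uniq => /and3P [].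
have u2 : uniq (h2 :: s2) by move: u; rewrite cat_uniq => /and3P [].
have D : forall z, z \in h1 :: s1 -> z \in h2 :: s2 -> False.
  move=> z z1 z2; move: u; rewrite cat_uniq => /and3P [_ /hasP []]; by exists z.
set l1 := last h1 s1; set l2 := last h2 s2.
have l1i : l1 \in h1 :: s1 by apply: mem_last.
have l2i : l2 \in h2 :: s2 by apply: mem_last.
have h1i : h1 \in h1 :: s1 by rewrite inE eqxx.
have h2i : h2 \in h2 :: s2 by rewrite inE eqxx.
rewrite cat_cons E_pe ?cat_cons // E_pe // E_pe // rcons_cat rcons_cons pe_cat.
rewrite /= -/l1 !pe_rcons -/l1 -/l2.
have sub : forall (a b z : T) (P : seq T), a \in P -> b \in P -> z \in [set a; b] -> z \in P.
  by move=> a b z P ha hb; rewrite !inE => /orP [] /eqP ->.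
have ne : forall (A B : {set T}) (z : T), z \in A -> (z \in B -> False) -> A != B.
  by move=> A B z hA hB; apply/negP => /eqP hAB; apply: hB; rewrite -hAB.
have w1 := pe_wrap u1 hs1; have w2 := pe_wrap u2 hs2.
apply/setP => e; rewrite /symd !inE.
have c1 : e \in pe h1 s1 -> ~~ [|| e == [set l1; h1], e == [set l2; h2], e == [set l1; h2] | e == [set l2; h1]].
  move=> he; rewrite !negb_or; apply/and4P; split; apply/negP => /eqP hq; rewrite hq in he.
  - by rewrite he in w1.
  - by apply: (D l2) => //; apply: (pe_vert he); rewrite !inE eqxx.
  - by apply: (D h2) => //; apply: (pe_vert he); rewrite !inE eqxx orbT.
  - by apply: (D l2) => //; apply: (pe_vert he); rewrite !inE eqxx.
have c2 : e \in pe h2 s2 -> ~~ [|| e == [set l1; h1], e == [set l2; h2], e == [set l1; h2] | e == [set l2; h1]].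
  move=> he; rewrite !negb_or; apply/and4P; split; apply/negP => /eqP hq; rewrite hq in he.
  - by apply: (D l1) => //; apply: (pe_vert he); rewrite !inE eqxx.
  - by rewrite he in w2.
  - by apply: (D l1) => //; apply: (pe_vert he); rewrite !inE eqxx.
  - by apply: (D h1) => //; apply: (pe_vert he); rewrite !inE eqxx orbT.
have c3 : e == [set l1; h2] -> ~~ ((e == [set l1; h1]) || (e == [set l2; h2])).
  move/eqP => ->; rewrite negb_or; apply/andP; split.
    apply: (ne _ _ h2); first by rewrite !inE eqxx orbT.
    by move=> hh; apply: (D h2) => //; apply: (sub _ _ _ _ l1i h1i hh).
  apply: (ne _ _ l1); first by rewrite !inE eqxx.
  by move=> hh; apply: (D l1) => //; apply: (sub _ _ _ _ l2i h2i hh).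
have c4 : e == [set l2; h1] -> ~~ ((e == [set l1; h1]) || (e == [set l2; h2])).
  move/eqP => ->; rewrite negb_or; apply/andP; split.
    apply: (ne _ _ l2); first by rewrite !inE eqxx.
    by move=> hh; apply: (D l2) => //; apply: (sub _ _ _ _ l1i h1i hh).
  apply: (ne _ _ h1); first by rewrite !inE eqxx orbT.
  by move=> hh; apply: (D h1) => //; apply: (sub _ _ _ _ l2i h2i hh).
move: c1 c2 c3 c4.
case: (e \in pe h1 s1); case: (e \in pe h2 s2);
  case: (e == [set l1; h1]); case: (e == [set l2; h2]);
  case: (e == [set l1; h2]); case: (e == [set l2; h1]);
  move=> C1 C2 C3 C4;
  repeat (match goal with H : is_true true -> _ |- _ => specialize (H isT) end);
  simpl in *; by [].
Qed.

Lemma E_rot i c : uniq c -> E (rot i c) = E c.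
Proof.
move=> u; apply/setP => e; apply/imsetP/imsetP => -[y hy ->]; exists y;
  rewrite ?mem_rot // ?next_rot //; by rewrite mem_rot in hy.
Qed.

Lemma E_rev c : uniq c -> E (rev c) = E c.
Proof.
move=> u; apply/setP => e; apply/imsetP/imsetP => -[y hy ->].
  rewrite mem_rev in hy; exists (prev c y); first by rewrite mem_prev.
  by rewrite next_rev // next_prev // setUC.
exists (next c y); first by rewrite mem_rev mem_next.
by rewrite next_rev // prev_next // setUC.
Qed.

Lemma E_vert c e z : e \in E c -> z \in e -> z \in c.
Proof.
case/imsetP => y hy -> ; rewrite !inE => /orP [] /eqP ->; by rewrite ?mem_next.
Qed.

Lemma rot_next c x : uniq c -> x \in c ->
  exists i s, rot i c = next c x :: s /\ last (next c x) s = x.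
Proof.
move=> u hx; have hy : next c x \in c by rewrite mem_next.
case: (rot_to hy) => i s hr; exists i, s; split => //.
have ur : uniq (next c x :: s) by rewrite -hr rot_uniq.
have := prev_rot i u (next c x); rewrite hr prev_next //.
rewrite prev_nth inE eqxx /=.
move: ur => /= /andP [hn _]; rewrite (memNindex hn) => H.
by rewrite -[X in _ = X]H (last_nth (next c x)).
Qed.

Lemma set2_eq (a b x y : T) : [set a; b] = [set x; y] -> (a = x /\ b = y) \/ (a = y /\ b = x).
Proof.
move=> h.
have ha : a \in [set x; y] by rewrite -h !inE eqxx.
have hb : b \in [set x; y] by rewrite -h !inE eqxx orbT.
have hx : x \in [set a; b] by rewrite h !inE eqxx.
have hy : y \in [set a; b] by rewrite h !inE eqxx orbT.
rewrite !inE in ha hb hx hy.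
case/orP: ha => /eqP ha; case/orP: hb => /eqP hb.
- left; split => //; rewrite hb; case/orP: hy => /eqP -> //; by rewrite ?ha ?hb.
- by left.
- by right.
- right; split => //; rewrite hb; case/orP: hx => /eqP -> //; by rewrite ?ha ?hb.
Qed.

End Graph.

Section Orb.
Variables n k : nat.
Hypothesis k0 : 0 < k.
Hypothesis kn : 2 * k + 1 <= n.

Local Notation S := (sv n k).
Local Notation f := (@fmap n).

Lemma iter_fmap t x : iter t f (S x) = S (x + t * k).
Proof.
elim: t => [|t IH]; first by rewrite mul0n addn0.
by rewrite iterS IH fmap_S // mulSnr addnA.
Qed.

Lemma orbit_mem x y : y \in orbit f (S x) <-> exists t, y = S (x + t * k).
Proof.
rewrite -fconnect_orbit; split.
  by move=> h; exists (findex f (S x) y); rewrite -iter_fmap iter_findex.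
by case=> t ->; rewrite -iter_fmap fconnect_iter.
Qed.

Definition Sset : pred (word n) := fun y => [exists a : 'I_n, y == S a].

Lemma S_in_Sset a : S a \in Sset.
Proof.
apply/existsP; exists (Ordinal (ltn_pmod a (n_gt0 k0 kn))) => /=.
by apply/eqP; apply: S_mod.
Qed.

Lemma fmap_homo : {homo f : y / y \in Sset}.
Proof.
by move=> y /existsP [a /eqP ->]; rewrite fmap_S // S_in_Sset.
Qed.

Lemma fmap_inj_in : {in Sset &, injective f}.
Proof.
move=> y z /existsP [a /eqP ->] /existsP [b /eqP ->].
rewrite !fmap_S // => /eqP; rewrite S_eq // eqn_modDr -(S_eq k0 kn).
by move/eqP.
Qed.

Lemma orbit_fcycle x : fcycle f (orbit f (S x)).
Proof. exact: (cycle_orbit_in fmap_homo fmap_inj_in (S_in_Sset x)). Qed.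

Lemma next_orbit x y : y \in orbit f (S x) -> next (orbit f (S x)) y = f y.
Proof.
move=> hy; have := next_cycle (orbit_fcycle x) hy.
by rewrite /frel /= => /eqP.
Qed.

Lemma S_neq a s : 0 < s < n -> S a != S (a + s).
Proof.
move=> /andP [h1 h2]; rewrite S_eq //; apply/negP => /eqP /modS_small h.
by have := h h2; lia.
Qed.

Lemma size_orbit3 x : 3 <= size (orbit f (S x)).
Proof.
have -> : 3 = size [:: S x; S (x + 1 * k); S (x + 2 * k)] by [].
apply: uniq_leq_size.
  rewrite /= !inE negb_or !S_neq ?andbT; try lia.
  by rewrite (_ : x + 2 * k = x + 1 * k + k) ?S_neq; lia.
move=> y; rewrite !inE => /or3P [] /eqP ->; apply/orbit_mem.
- by exists 0; rewrite addn0.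
- by exists 1.
- by exists 2.
Qed.

Local Notation g := (gcdn n k).

Lemma g_gt0 : 0 < g.
Proof. by rewrite gcdn_gt0 (n_gt0 k0 kn). Qed.

Lemma NT q a : exists i t, i < g /\ a = q + i + t * k %[mod n].
Proof.
case: (egcdnP n k0) => km kn' hb _.
rewrite gcdnC in hb.
set D := a + (n - q %% n).
exists (D %% g), (D %/ g * km); split; first by rewrite ltn_mod g_gt0.
have e1 : D %/ g * km * k = D %/ g * kn' * n + D %/ g * g.
  by rewrite -mulnA hb mulnDr mulnA.
have e2 := divn_eq D g.
have e3 := divn_eq q n.
have e4 := ltn_pmod q (n_gt0 k0 kn).
have -> : q + D %% g + D %/ g * km * k = (D %/ g * kn' + q %/ n + 1) * n + a.
  rewrite e1 /D; rewrite /D in e2; lia.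
by rewrite modnMDl.
Qed.

Lemma class_disj q i i' t t' : i < g -> i' < g ->
  S (q + i + t * k) = S (q + i' + t' * k) -> i = i'.
Proof.
move=> hi hi' /eqP; rewrite S_eq // => /eqP h.
have hg : g %| n by apply: dvdn_gcdl.
have hgk : g %| k by apply: dvdn_gcdr.
have := congr1 (fun x => x %% g) h; rewrite /= !modn_dvdm //.
move: hgk hi hi'; move: (gcdn n k) => G /dvdnP [kk ->] hi hi'.
rewrite (_ : q + i + t * (kk * G) = t * kk * G + (q + i)); last lia.
rewrite (_ : q + i' + t' * (kk * G) = t' * kk * G + (q + i')); last lia.
rewrite !modnMDl => /eqP; rewrite eqn_modDl !modn_small //; by move/eqP.
Qed.

End Orb.

Section Main.
Variables n k r : nat.
Hypothesis k0 : 0 < k.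
Hypothesis kn : 2 * k + 1 <= n.
Local Notation S := (sv n k).
Local Notation f := (@fmap n).
Local Notation g := (gcdn n k).

Definition V i := orbit f (S (r + i)).
Definition CE i := cycle_edges (S (r + i)).

Lemma V_mem i y : y \in V i <-> exists t, y = S (r + i + t * k).
Proof. exact: (orbit_mem k0 kn). Qed.

Lemma V_memS i t a : a = r + i + t * k -> S a \in V i.
Proof. by move=> ->; apply/V_mem; exists t. Qed.

Lemma V_uniq i : uniq (V i).
Proof. exact: orbit_uniq. Qed.

Lemma V_size i : 3 <= size (V i).
Proof. exact: (size_orbit3 k0 kn). Qed.

Lemma CE_E i : CE i = E (V i).
Proof.
rewrite /CE /cycle_edges /E; apply: eq_in_imset => y hy.
by rewrite (next_orbit k0 kn).
Qed.

Lemma CE_vert i e z : e \in CE i -> z \in e -> z \in V i.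
Proof. rewrite CE_E; exact: E_vert. Qed.

Lemma V_disj i i' y : i < g -> i' < g -> y \in V i -> y \in V i' -> i = i'.
Proof.
move=> hi hi' /V_mem [t ->] /V_mem [t' h].
exact: (class_disj k0 kn hi hi' h).
Qed.

Lemma V_cover a : exists i, i < g /\ S a \in V i.
Proof.
have [i [t [hi ht]]] := NT k0 kn r a.
exists i; split => //; apply/V_mem; exists t.
by apply/eqP; rewrite S_eq // ht.
Qed.

Lemma cyc_mem x e : e \in cycle_edges (S x) <->
  exists t, e = [set S (x + t * k); S (x + t * k + k)].
Proof.
split.
  case/imsetP => y /(orbit_mem k0 kn) [t ->] ->; exists t.
  by rewrite (fmap_S k0 kn).
case=> t ->; apply/imsetP; exists (S (x + t * k)).
  by apply/(orbit_mem k0 kn); exists t.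
by rewrite (fmap_S k0 kn).
Qed.

Lemma CE_edge i t a : a = r + i + t * k -> [set S a; S (a + k)] \in CE i.
Proof. by move=> ->; apply/cyc_mem; exists t. Qed.

Lemma bigcup_mem q e : e \in \bigcup_(i < g) cycle_edges (S (q + i)) <->
  exists a, e = [set S a; S (a + k)].
Proof.
split.
  case/bigcupP => i _ /cyc_mem [t ->]; by exists (q + i + t * k).
case=> a ->.
have [i [t [hi ht]]] := NT k0 kn q a.
apply/bigcupP; exists (Ordinal hi) => //=; apply/cyc_mem; exists t.
have e1 : S a = S (q + i + t * k) by apply/eqP; rewrite S_eq // ht.
have e2 : S (a + k) = S (q + i + t * k + k).
  by apply/eqP; rewrite S_eq // eqn_modDr ht.
by rewrite e1 e2.
Qed.

Definition U := \bigcup_(i < g) cycle_edges (S i).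

Lemma U_eq : U = \bigcup_(i < g) CE i.
Proof.
apply/setP => e; apply/idP/idP => h.
  apply/bigcup_mem; apply/(bigcup_mem 0).
  by rewrite (eq_bigr (fun i : 'I_g => cycle_edges (S i))) // => i _; rewrite add0n.
rewrite /U (eq_bigr (fun i : 'I_g => cycle_edges (S (0 + i)))) //.
by apply/bigcup_mem; apply/(bigcup_mem r).
Qed.


Definition Q j := quad_edges (S (r + j)) (S (r + j + k)) (S (r + j + 2 * k + 1)) (S (r + j + k + 1)).

Definition F J := foldl (fun E j => symdiff E (quad_edges (sv n k (r + j)) (sv n k (r + j + k))
                                           (sv n k (r + j + 2 * k + 1)) (sv n k (r + j + k + 1))))
        (\bigcup_(i < g) cycle_edges (sv n k i)) (iota 0 J).

Lemma F_result : result_edges n k r = F g.-1.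
Proof. by []. Qed.

Lemma F_S J : F J.+1 = symdiff (F J) (Q J).
Proof. by rewrite /F -[J.+1]addn1 iotaD foldl_cat. Qed.

Definition R J := \bigcup_(i < g | J < i) CE i.

Lemma R_S J : J.+1 < g -> R J = CE J.+1 :|: R J.+1.
Proof.
move=> hJ; rewrite /R (bigD1 (Ordinal hJ)) //=; congr (_ :|: _).
apply: eq_bigl => i; rewrite -val_eqE /=.
by case: (ltngtP J.+1 i) => h; try lia; rewrite ?h ?ltnSn //=; apply/andP; split; lia.
Qed.

Lemma symdiff_union (X Rr Qq : {set {set word n}}) :
  (forall e, e \in Qq -> e \notin Rr) ->
  symdiff (X :|: Rr) Qq = symdiff X Qq :|: Rr.
Proof.
move=> h; apply/setP => e; rewrite /symdiff !inE.
case hR: (e \in Rr); case hQ: (e \in Qq); rewrite ?orbT ?orbF //=.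
by have := h e hQ; rewrite hR.
Qed.

Definition Inv J c := [/\ uniq c, 3 <= size c,
  (forall y, y \in c <-> exists i, i <= J /\ y \in V i),
  [set S (r + J); S (r + J + k)] \in E c &
  F J = E c :|: R J].

Lemma Inv0 : Inv 0 (V 0).
Proof.
split.
- exact: V_uniq.
- exact: V_size.
- move=> y; split; first by move=> h; exists 0.
  by case=> i [hi h]; move: h; have -> : i = 0 by lia.
- by rewrite -CE_E; apply: (CE_edge (i:=0) (t:=0)); lia.
- rewrite (_ : F 0 = U) // U_eq -CE_E /R.
  have g0 : 0 < g by apply: g_gt0.
  rewrite (bigD1 (Ordinal g0)) //=; congr (_ :|: _).
  apply: eq_bigl => i; rewrite -val_eqE /= lt0n //.
Qed.


Lemma Q_vert J e : e \in Q J -> exists2 z, z \in e & (z \in V J) || (z \in V J.+1).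
Proof.
have aV : S (r + J) \in V J by apply: (V_memS (t:=0)); lia.
have bV : S (r + J + k) \in V J by apply: (V_memS (t:=1)); lia.
have dV : S (r + J + k + 1) \in V J.+1 by apply: (V_memS (t:=1)); lia.
rewrite /Q /quad_edges !inE -!orbA => /or4P [] /eqP ->.
- by exists (S (r + J)); rewrite ?aV // !inE eqxx.
- by exists (S (r + J + k)); rewrite ?bV // !inE eqxx.
- by exists (S (r + J + k + 1)); rewrite ?dV ?orbT // !inE eqxx orbT.
- by exists (S (r + J)); rewrite ?aV // !inE eqxx orbT.
Qed.

Lemma step_common J c h1 s1 h2 s2 : J.+1 < g -> Inv J c ->
  uniq (h1 :: s1) -> (forall y, (y \in h1 :: s1) = (y \in c)) -> E (h1 :: s1) = E c ->
  size (h1 :: s1) = size c ->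
  uniq (h2 :: s2) -> (forall y, (y \in h2 :: s2) = (y \in V J.+1)) -> E (h2 :: s2) = CE J.+1 ->
  size (h2 :: s2) = size (V J.+1) ->
  [set [set last h1 s1; h1]; [set last h2 s2; h2]; [set last h1 s1; h2]; [set last h2 s2; h1]] = Q J ->
  Inv J.+1 ((h1 :: s1) ++ (h2 :: s2)).
Proof.
move=> hJ [hu hs hm he hf] u1 m1 e1 z1 u2 m2 e2 z2 hQ.
have hJg : J < g by lia.
have D : forall y, y \in h1 :: s1 -> y \in h2 :: s2 -> False.
  move=> y; rewrite m1 m2 => /hm [i [hi hy]] hy'.
  have := V_disj (_ : i < g) hJ hy hy'; lia.
have ucat : uniq ((h1 :: s1) ++ (h2 :: s2)).
  rewrite cat_uniq u1 u2 andbT; apply/hasPn => y hy; apply/negP => hy'.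
  exact: D hy' hy.
have hs1 : 1 < size s1 by move: z1 hs => /= z1' hs'; lia.
have hs2 : 1 < size s2 by have := V_size J.+1; move: z2 => /= z2'; lia.
have EM := E_merge ucat hs1 hs2; rewrite hQ e1 e2 in EM.
have e'CE : [set S (r + J.+1); S (r + J.+1 + k)] \in CE J.+1.
  by apply: (CE_edge (t:=0)); lia.
split.
- exact: ucat.
- by rewrite size_cat z2; have := V_size J.+1; lia.
- move=> y; rewrite mem_cat m1 m2; split.
    case/orP => [/hm [i [hi hy]] | hy]; first by exists i; split => //; lia.
    by exists J.+1.
  case=> i [hi hy]; case: (ltngtP i J.+1) => hiJ; last 1 first.
  + by rewrite -hiJ hy orbT.
  + by apply/orP; left; apply/hm; exists i; split => //; lia.
  + lia.
- rewrite EM /symd !inE e'CE orbT andbT /=.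
  have nv : forall (z : word n) (q : {set word n}), z \in q -> z \in V J ->
      [set S (r + J.+1); S (r + J.+1 + k)] != q.
    move=> z q hz hzV; apply/negP => /eqP hq.
    have := CE_vert e'CE (_ : z \in [set S (r + J.+1); S (r + J.+1 + k)]).
    rewrite hq => /(_ hz) hz'.
    by have := V_disj hJg hJ hzV hz'; lia.
  have aV : S (r + J) \in V J by apply: (V_memS (t:=0)); lia.
  have bV : S (r + J + k) \in V J by apply: (V_memS (t:=1)); lia.
  rewrite orbF !negb_or -!andbA; apply/and4P; split.
  + by apply: (nv (S (r + J))) => //; rewrite !inE eqxx.
  + by apply: (nv (S (r + J + k))) => //; rewrite !inE eqxx.
  + apply/negP => /eqP hq.
  have : S (r + J.+1) \in [set S (r + J + 2 * k + 1); S (r + J + k + 1)].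
    by rewrite -hq !inE eqxx.
  rewrite !inE.
  rewrite (_ : r + J + 2 * k + 1 = r + J.+1 + 2 * k); last lia.
  rewrite (_ : r + J + k + 1 = r + J.+1 + k); last lia.
  by rewrite (negbTE (S_neq k0 kn _ _)) ?(negbTE (S_neq k0 kn _ _)) //; lia.
  + by apply: (nv (S (r + J))) => //; rewrite !inE eqxx orbT.
- rewrite F_S hf (R_S hJ) setUA symdiff_union.
    by rewrite EM.
  move=> e /Q_vert [z hz hzV]; apply/negP => /bigcupP [i hi heI].
  have hzi := CE_vert heI hz.
  case/orP: hzV => hzV.
    by have := V_disj hJg (ltn_ord i) hzV hzi; lia.
  by have := V_disj hJ (ltn_ord i) hzV hzi; lia.
Qed.


Lemma quad_perm1 (a b cc d : word n) :
  [set [set a; b]; [set cc; d]; [set a; d]; [set cc; b]] = quad_edges a b cc d.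
Proof.
rewrite /quad_edges [[set a; d]]setUC [[set cc; b]]setUC.
apply/setP => e; rewrite !inE.
by case: (e == [set a; b]); case: (e == [set b; cc]); case: (e == [set cc; d]);
  case: (e == [set d; a]).
Qed.

Lemma quad_perm2 (a b cc d : word n) :
  [set [set b; a]; [set d; cc]; [set b; cc]; [set d; a]] = quad_edges a b cc d.
Proof.
rewrite /quad_edges [[set b; a]]setUC [[set d; cc]]setUC.
apply/setP => e; rewrite !inE.
by case: (e == [set a; b]); case: (e == [set b; cc]); case: (e == [set cc; d]);
  case: (e == [set d; a]).
Qed.

Lemma step J c : J.+1 < g -> Inv J c -> exists c', Inv J.+1 c'.
Proof.
move=> hJ hI; have hI' := hI; case: hI' => [hu hs hm he hf].
have dV : S (r + J + k + 1) \in V J.+1 by apply: (V_memS (t:=1)); lia.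
have ndc : next (V J.+1) (S (r + J + k + 1)) = S (r + J + 2 * k + 1).
  rewrite (next_orbit k0 kn (x := r + J.+1)); last exact: dV.
  by rewrite (fmap_S k0 kn); congr (sv n k _); lia.
have uV := V_uniq J.+1.
have pcd : prev (V J.+1) (S (r + J + 2 * k + 1)) = S (r + J + k + 1).
  by rewrite -ndc prev_next.
case/imsetP: he => y hy /set2_eq [[ya yb] | [ya yb]].
-
  have [i1 [s1 [r1 l1]]] := rot_next hu hy.
  rewrite -yb in r1 l1; rewrite -ya in l1.
  have ccr : S (r + J + 2 * k + 1) \in rev (V J.+1).
    by rewrite mem_rev -ndc mem_next.
  have urV : uniq (rev (V J.+1)) by rewrite rev_uniq.
  have [i2 [s2 [r2 l2]]] := rot_next urV ccr.
  rewrite next_rev // pcd in r2 l2.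
  exists ((S (r + J + k) :: s1) ++ (S (r + J + k + 1) :: s2)).
  apply: (step_common hJ hI).
  + by rewrite -r1 rot_uniq.
  + by move=> z; rewrite -r1 mem_rot.
  + by rewrite -r1 E_rot.
  + by rewrite -r1 size_rot.
  + by rewrite -r2 rot_uniq.
  + by move=> z; rewrite -r2 mem_rot mem_rev.
  + by rewrite -r2 E_rot // E_rev // CE_E.
  + by rewrite -r2 size_rot size_rev.
  + by rewrite l1 l2 quad_perm1.
-
  have [i1 [s1 [r1 l1]]] := rot_next hu hy.
  rewrite -ya in r1 l1; rewrite -yb in l1.
  have [i2 [s2 [r2 l2]]] := rot_next uV dV.
  rewrite ndc in r2 l2.
  exists ((S (r + J) :: s1) ++ (S (r + J + 2 * k + 1) :: s2)).
  apply: (step_common hJ hI).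
  + by rewrite -r1 rot_uniq.
  + by move=> z; rewrite -r1 mem_rot.
  + by rewrite -r1 E_rot.
  + by rewrite -r1 size_rot.
  + by rewrite -r2 rot_uniq.
  + by move=> z; rewrite -r2 mem_rot.
  + by rewrite -r2 E_rot // CE_E.
  + by rewrite -r2 size_rot.
  + by rewrite l1 l2 quad_perm2.
Qed.

Lemma Inv_all J : J < g -> exists c, Inv J c.
Proof.
elim: J => [|J IH] hJ; first by exists (V 0); apply: Inv0.
have [c hc] := IH (ltnW hJ).
exact: step hJ hc.
Qed.

End Main.

Lemma foldl_sub (T : finType) (A : {set T}) (B : nat -> {set T}) l e :
  e \in foldl (fun E j => symdiff E (B j)) A l -> e \in A \/ exists2 j, j \in l & e \in B j.
Proof.
elim: l A => [|j l IH] A /=; first by left.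
case/IH => [| [j' hj' he]]; last by right; exists j' => //; rewrite inE hj' orbT.
rewrite /symdiff !inE => /orP [] /andP [h1 h2]; first by left.
by right; exists j; rewrite ?inE ?eqxx.
Qed.

Section Fin.
Variables n k r : nat.
Hypothesis k0 : 0 < k.
Hypothesis kn : 2 * k + 1 <= n.
Local Notation S := (sv n k).

Lemma adj_pair a d : k <= d -> d + k <= n ->
  exists x z, [set S a; S (a + d)] = [set x; z] /\ kneser_adj k x z.
Proof. by move=> h1 h2; exists (S a), (S (a + d)); split => //; apply: adj_S. Qed.

Lemma F_adj J e : e \in F n k r J -> exists x z, e = [set x; z] /\ kneser_adj k x z.
Proof.
case/foldl_sub => [/bigcupP [i _ /(cyc_mem k0 kn) [t ->]] | [j _ he]].
  by apply: adj_pair; lia.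
move: he; rewrite /quad_edges !inE -!orbA => /or4P [] /eqP ->.
- by apply: adj_pair; lia.
- rewrite (_ : r + j + 2 * k + 1 = r + j + k + (k + 1)); last lia.
  by apply: adj_pair; lia.
- have hkk : k + k <= n by lia.
  have [x [z [h1 h2]]] := adj_pair (r + j + k + 1) (leqnn k) hkk.
  exists z, x; split; last by rewrite adj_sym.
  rewrite [RHS]setUC -h1 [LHS]setUC; congr [set _; _]; congr (sv n k _); lia.
- have hkk : k + 1 + k <= n by lia.
  have hk1 : k <= k + 1 by lia.
  have [x [z [h1 h2]]] := adj_pair (r + j) hk1 hkk.
  exists z, x; split; last by rewrite adj_sym.
  rewrite [RHS]setUC -h1 [LHS]setUC; congr [set _; _]; congr (sv n k _); lia.
Qed.

End Fin.

Theorem mainTheorem12 (n k r : nat) :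
  0 < k -> 2 * k + 1 <= n -> r < n ->
  exists c : seq (word n),
    [/\ uniq c, 2 < size c,
        c =i [seq sv n k i | i <- iota 0 n],
        cycle (@kneser_adj n k) c
      & result_edges n k r = seq_cycle_edges c].
Proof.
move=> k0 kn hr.
have g0 := g_gt0 k0 kn.
have hg : (gcdn n k).-1 < gcdn n k by lia.
have [c [hu hs hm _ hf]] := Inv_all r k0 kn hg.
have R0 : R n k r (gcdn n k).-1 = set0.
  rewrite /R big_pred0 // => i /=; have := ltn_ord i; lia.
rewrite R0 setU0 in hf.
exists c; split.
- exact: hu.
- exact: hs.
- move=> y; apply/idP/idP => h.
    case/hm: h => i [hi /(V_mem _ k0 kn) [t ->]].
    apply/mapP; exists ((r + i + t * k) %% n); last exact: S_mod.
    by rewrite mem_iota add0n ltn_pmod //; lia.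
  case/mapP: h => a _ ->.
  have [i [hi hV]] := V_cover r k0 kn a.
  by apply/hm; exists i; split => //; lia.
- apply: cycle_from_next => // y hy.
  have he : [set y; next c y] \in F n k r (gcdn n k).-1.
    by rewrite hf; apply/imsetP; exists y.
  have [x [z [hxz hadj]]] := F_adj k0 kn he.
  case: (set2_eq hxz) => [[-> ->] | [-> ->]] //.
  by rewrite adj_sym.
- by rewrite F_result hf.
Qed.
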